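(* Let $(J,\mathcal F)$ and coefficients $w^S_j>0$ ($j\in S\in\mathcal F$) be as in the context. For every input $\mathbf c\in\mathbb R^J$, algorithms $\mathrm{AG}_1$ and $\mathrm{AG}_2$ are equivalent: when ties in the minimizations are broken in the same way, they produce the same output $(\mathit{ADMISSIBLE},\boldsymbol\pi,\boldsymbol\nu)$.
   Context: $J$ finite, $|J|=n$; $\mathcal F\subseteq2^J$, $\emptyset\in\mathcal F$, each nonempty $S\in\mathcal F$ has nonempty $\partial^-S=\{j\in S:S\setminus\{j\}\in\mathcal F\}$, each $S\in\mathcal F$, $S\ne J$, has $j\in J\setminus S$ with $S\cup\{j\}\in\mathcal F$. $\mathrm{AG}_1$ on input $\mathbf c$: $S_1=J$, $y^{S_1}=\min\{c_j/w^{S_1}_j:j\in\partial^-S_1\}$, $\pi_1$ a minimizer, $\nu_{\pi_1}=y^{S_1}$; for $k=2..n$: $S_k=S_{k-1}\setminus\{\pi_{k-1}\}$, $y^{S_k}=\min\{(c_j-\sum_{l=1}^{k-1}y^{S_l}w^{S_l}_j)/w^{S_k}_j:j\in\partial^-S_k\}$, $\pi_k$ a minimizer, $\nu_{\pi_k}=\nu_{\pi_{k-1}}+y^{S_k}$. $\mathrm{AG}_2$ on input $\mathbf c$: $S_1=J$, $\nu^{S_1}_j=c_j/w^{S_1}_j$ ($j\in J$), $\pi_1\in\arg\min\{\nu^{S_1}_j:j\in\partial^-S_1\}$, $\nu_{\pi_1}=\nu^{S_1}_{\pi_1}$; for $k=2..n$: $S_k=S_{k-1}\setminus\{\pi_{k-1}\}$,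 $\nu^{S_k}_j=\nu^{S_{k-1}}_j+\left(\frac{w^{S_{k-1}}_j}{w^{S_k}_j}-1\right)[\nu^{S_{k-1}}_j-\nu^{S_{k-1}}_{\pi_{k-1}}]$ for $j\in S_k$, $\pi_k\in\arg\min\{\nu^{S_k}_j:j\in\partial^-S_k\}$, $\nu_{\pi_k}=\nu^{S_k}_{\pi_k}$. Both set $\mathit{ADMISSIBLE}=\mathit{TRUE}$ if $\nu_{\pi_1}\le\cdots\le\nu_{\pi_n}$ and $\mathit{FALSE}$ otherwise. *)

(* Defs.v *)
From HB Require Import structures.
From mathcomp Require Import all_boot all_order all_algebra.
Set Implicit Arguments. Unset Strict Implicit. Unset Printing Implicit Defensive.
Import Order.TTheory GRing.Theory Num.Theory.
Local Open Scope ring_scope.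

Section AG.
Variables (R : realFieldType) (J : finType) (F : {set {set J}}).
Variable w : {set J} -> J -> R.
Variable c : J -> R.

Definition lbd (S : {set J}) : {set J} := [set j in S | (S :\ j) \in F].

Definition accessible_family : Prop :=
  [/\ set0 \in F,
      (forall S, S \in F -> S != set0 -> exists j, j \in lbd S) &
      (forall S, S \in F -> S != [set: J] ->
         exists2 j, j \notin S & (S :|: [set j]) \in F)].

Variable pi : seq J.   (* the sequence of choices pi_1, ..., pi_n (0-indexed) *)
Variable x0 : J.
Local Notation p k := (nth x0 pi k).

(* S_{k+1} (0-indexed: Sk 0 = J) *)
Definition Sk (k : nat) : {set J} := [set: J] :\: [set x in take k pi].

(* AG_1: acc1 k j = sum_{l<k} y^{S_l} w^{S_l}_j ; key1 k j the ratio minimized *)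
Fixpoint acc1 (k : nat) : J -> R :=
  match k with
  | 0 => fun _ => 0
  | k'.+1 => fun j =>
      acc1 k' j + ((c (p k') - acc1 k' (p k')) / w (Sk k') (p k')) * w (Sk k') j
  end.
Definition key1 (k : nat) (j : J) : R := (c j - acc1 k j) / w (Sk k) j.
Definition y1 (k : nat) : R := key1 k (p k).
Definition nu1 (k : nat) : R := \sum_(l < k.+1) y1 l.

(* AG_2: nu2 k j = nu^{S_{k+1}}_j *)
Fixpoint nu2 (k : nat) : J -> R :=
  match k with
  | 0 => fun j => c j / w [set: J] j
  | k'.+1 => fun j =>
      nu2 k' j + (w (Sk k') j / w (Sk k'.+1) j - 1) * (nu2 k' j - nu2 k' (p k'))
  end.
Definition key2 := nu2.
Definition nu2out (k : nat) : R := nu2 k (p k).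

(* pi is a legal run (with some tie-breaking) of the algorithm minimizing key *)
Definition valid_run (key : nat -> J -> R) : Prop :=
  size pi = #|J| /\
  forall k, (k < #|J|)%N ->
    p k \in lbd (Sk k) /\ forall j, j \in lbd (Sk k) -> key k (p k) <= key k j.

Definition AG1_valid := valid_run key1.
Definition AG2_valid := valid_run key2.

(* outputs: (ADMISSIBLE, pi, nu) ; nu given as the sequence nu_{pi_1},...,nu_{pi_n} *)
Definition AG1_nu : seq R := [seq nu1 k | k <- iota 0 #|J|].
Definition AG2_nu : seq R := [seq nu2out k | k <- iota 0 #|J|].
Definition admissible (nus : seq R) : bool := sorted <=%R nus.
Definition AG1_output := (admissible AG1_nu, pi, AG1_nu).
Definition AG2_output := (admissible AG2_nu, pi, AG2_nu).
End AG.

(* Main.v *)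
Require Import Defs.
From HB Require Import structures.
From mathcomp Require Import all_boot all_order all_algebra.
From mathcomp Require Import ring.
Import Order.TTheory GRing.Theory Num.Theory.
Local Open Scope ring_scope.

Section Proofs.
Variables (R : realFieldType) (J : finType) (F : {set {set J}}).
Variable w : {set J} -> J -> R.
Hypothesis hF : accessible_family F.
Hypothesis hw : forall S, S \in F -> forall j, j \in S -> 0 < w S j.
Variables (c : J -> R) (pi : seq J) (x0 : J).
Local Notation p k := (nth x0 pi k).

Lemma setT_in_F : [set: J] \in F.
Proof.
case: hF => h0 _ hA.
have H : forall m, (m <= #|J|)%N -> exists2 S, S \in F & (m <= #|S|)%N.
  elim=> [|m IH] hm; first by exists set0.
  have [S SF hS] := IH (ltnW hm).
  have [ST|nST] := eqVneq S [set: J].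
    by exists S => //; rewrite ST cardsT.
  have [j jS jF] := hA S SF nST.
  exists (S :|: [set j]) => //.
  by rewrite setUC cardsU1 jS.
have [S SF hS] := H _ (leqnn _).
suff -> : [set: J] = S by [].
apply/eqP; rewrite eq_sym eqEcard subsetT cardsT; exact hS.
Qed.

Lemma Sk0 : Sk pi 0 = [set: J].
Proof. by apply/setP => x; rewrite /Sk take0 !inE. Qed.

Lemma SkS k : (k < size pi)%N -> Sk pi k.+1 = Sk pi k :\ p k.
Proof.
move=> hk; apply/setP => x.
rewrite /Sk (take_nth x0 hk) !inE mem_rcons in_cons.
by case: (x == p k); case: (x \in take k pi).
Qed.

Definition P k := forall l, (l < k)%N -> p l \in lbd F (Sk pi l).

Lemma SkF k : (k <= size pi)%N -> P k -> Sk pi k \in F.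
Proof.
elim: k => [|k IH] hk hP; first by rewrite Sk0 setT_in_F.
rewrite SkS //.
have := hP k (ltnSn k); rewrite inE; by case/andP.
Qed.

Definition N k := \sum_(l < k) y1 w c pi x0 l.

Lemma inv k : (k <= size pi)%N -> P k -> forall j, j \in Sk pi k ->
  key1 w c pi x0 k j = nu2 w c pi x0 k j - N k.
Proof.
elim: k => [|k IH] hk hP j hj.
  by rewrite /key1 /N big_ord0 /= !subr0 Sk0.
have hP' : P k by move=> l hl; apply: hP; apply: ltnW.
have SF := SkF k (ltnW hk) hP'.
have pkS : p k \in Sk pi k.
  by have := hP k (ltnSn k); rewrite inE; case/andP.
move: hj; rewrite SkS // => /setD1P [_ jS].
have IHj := IH (ltnW hk) hP' j jS.
have IHp := IH (ltnW hk) hP' _ pkS.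
have wj : w (Sk pi k) j != 0 by rewrite gt_eqF // hw.
have ha : c j - acc1 w c pi x0 k j = w (Sk pi k) j * (nu2 w c pi x0 k j - N k).
  by rewrite -IHj /key1 mulrC divfK.
have acc1S : acc1 w c pi x0 k.+1 j = acc1 w c pi x0 k j + key1 w c pi x0 k (p k) * w (Sk pi k) j by [].
rewrite /N big_ord_recr /= -/(N k) /y1 IHp.
rewrite {1}/key1 acc1S IHp opprD addrA ha /=.
set a := w (Sk pi k) j; set b := w (Sk pi k.+1) j.
set u := nu2 w c pi x0 k j; set v := nu2 w c pi x0 k (p k).
ring.
Qed.

Lemma lbd_sub S j : j \in lbd F S -> j \in S.
Proof. by rewrite inE => /andP[]. Qed.

Lemma transfer k : size pi = #|J| -> (k < #|J|)%N -> P k ->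
  p k \in lbd F (Sk pi k) ->
  ((forall j, j \in lbd F (Sk pi k) -> key1 w c pi x0 k (p k) <= key1 w c pi x0 k j) <->
   (forall j, j \in lbd F (Sk pi k) -> key2 w c pi x0 k (p k) <= key2 w c pi x0 k j)).
Proof.
move=> hs hk hP hp.
have hk' : (k <= size pi)%N by rewrite hs ltnW.
have E := inv k hk' hP.
split=> H j hj; have := H j hj;
  by rewrite (E _ (lbd_sub _ _ hj)) (E _ (lbd_sub _ _ hp)) ?lerD2r.
Qed.

Lemma validP (key : nat -> J -> R) : valid_run F pi x0 key -> forall k, (k <= #|J|)%N -> P k.
Proof. by case=> hs H k hk l hl; case: (H l (leq_trans hl hk)). Qed.

Lemma nu_eq k : size pi = #|J| -> (k < #|J|)%N -> P k ->
  p k \in lbd F (Sk pi k) -> nu1 w c pi x0 k = nu2out w c pi x0 k.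
Proof.
move=> hs hk hP hp.
have hk' : (k <= size pi)%N by rewrite hs ltnW.
rewrite /nu1 big_ord_recr /= -/(N k) /y1 (inv k hk' hP _ (lbd_sub _ _ hp)) /nu2out.
by rewrite addrC subrK.
Qed.
End Proofs.
Arguments validP {R J F pi x0 key}.

Theorem theorem3 (R : realFieldType) (J : finType) (F : {set {set J}})
  (w : {set J} -> J -> R)
  (hF : accessible_family F)
  (hw : forall S, S \in F -> forall j, j \in S -> 0 < w S j)
  (c : J -> R) (pi : seq J) (x0 : J) :
  (AG1_valid F w c pi x0 <-> AG2_valid F w c pi x0) /\
  (AG1_valid F w c pi x0 -> AG1_output w c pi x0 = AG2_output w c pi x0).
Proof.
split.
  split=> V; have HP := validP V; case: V => hs H; split=> // k hk;
  have [hp hm] := H k hk; split=> //;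
  have := @transfer _ _ _ _ hF hw c pi x0 k hs hk (HP k (ltnW hk)) hp; case=> A B; auto.
move=> V; have HP := validP V; case: V => hs H.
have E : AG1_nu w c pi x0 = AG2_nu w c pi x0.
  apply/eq_in_map => k; rewrite mem_iota add0n => /andP [_ hk].
  have [hp _] := H k hk.
  exact: (@nu_eq _ _ _ _ hF hw c pi x0 k hs) hk (HP k (ltnW hk)) hp.
by rewrite /AG1_output /AG2_output E.
Qed.
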